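(* For all integers $\alpha\ge2$, $0\le m\le\alpha$ and $n\in\mathbb Z$, $$r_{\alpha-1,n}r_{\alpha-1,n+1}c_{\alpha,m,n}=r_{\alpha,n}r_{\alpha-1,n+1}c_{\alpha-1,m,n}+r_{\alpha-1,n}r_{\alpha,n+1}c_{\alpha-1,m-1,n}+r_{\alpha,n}r_{\alpha,n+1}c_{\alpha-2,m-1,n}.$$
   Context: Let $(r_{1,n})_{n\in\mathbb Z}$ be a sequence of elements of a field $K$. Set $r_{0,n}=1$ and for $\alpha\ge1$, $r_{\alpha,n}=\det_{1\le i,j\le\alpha}(r_{1,n+i+j-1-\alpha})$. For $p\ge0$ define $s_p(j)=j$ if $j\le p$ and $s_p(j)=j+1$ if $j>p$. For $\alpha\ge1$ and $0\le m\le\alpha$ define the ''Wronskian with a defect'' $$c_{\alpha,m,n}=\det_{1\le i,j\le\alpha}\bigl(r_{1,\,n+i+s_{\alpha-m}(j)-\alpha-1}\bigr),$$ set $c_{0,0,n}=1$, and set $c_{\alpha,m,n}=0$ whenever $m<0$ or $m>\alpha$. (Thus $c_{\alpha,0,n}=r_{\alpha,n}$ and $c_{\alpha,\alpha,n}=r_{\alpha,n+1}$.) *)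

(* Defs.v *)
From HB Require Import structures.
From mathcomp Require Import all_boot all_order all_algebra.
Set Implicit Arguments. Unset Strict Implicit. Unset Printing Implicit Defensive.
Import Order.TTheory GRing.Theory Num.Theory.
Local Open Scope ring_scope.

Definition rdet (K : fieldType) (r1 : int -> K) (alpha : nat) (n : int) : K :=
  match alpha with
  | 0%N => 1
  | _ => \det (\matrix_(i < alpha, j < alpha)
                 r1 (n + (i.+1)%:Z + (j.+1)%:Z - 1 - alpha%:Z))
  end.

Definition sp (p j : nat) : nat := if (j <= p)%N then j else j.+1.

Definition cdet (K : fieldType) (r1 : int -> K) (alpha : nat) (m : int) (n : int) : K :=
  if (m < 0) || (alpha%:Z < m) then 0
  else match alpha with
  | 0%N => 1
  | _ => \det (\matrix_(i < alpha, j < alpha)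
                 r1 (n + (i.+1)%:Z + (sp (alpha - `|m|%N) j.+1)%:Z - alpha%:Z - 1))
  end.

(* Main.v *)
Require Import Defs.
From HB Require Import structures.
From mathcomp Require Import all_boot all_order all_algebra.
From Stdlib Require Import Lia.
Import Order.TTheory GRing.Theory Num.Theory.
Local Open Scope ring_scope.
Set Implicit Arguments. Unset Strict Implicit. Unset Printing Implicit Defensive.

Ltac nlia :=
  repeat match goal with
  | H : is_true (leq _ _) |- _ => move/ssrnat.leP: H => H
  | H : is_true (_ == _) |- _ => move/eqP: H => H
  | H : is_true (negb (_ == _)) |- _ => move/eqP: H => H
  | H : is_true (negb (leq _ _)) |- _ => rewrite -ltnNge in H
  | H : leq _ _ = false |- _ => move/negbT: H => H
  | H : (_ == _) = false |- _ => move/negbT: H => H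
  | H : leq _ _ = true |- _ => move/ssrnat.leP: H => H
  | H : (_ == _) = true |- _ => move/eqP: H => H
  end;
  try match goal with
  | |- is_true (leq _ _) => apply/ssrnat.leP
  | |- is_true (_ == _) => apply/eqP
  | |- is_true (negb (_ == _)) => apply/eqP
  | |- is_true (negb (leq _ _)) => rewrite -ltnNge; apply/ssrnat.leP
  end;
  change addn with Nat.add in *; change subn with Nat.sub in *; change muln with Nat.mul in *; cbn [nat_of_bool widen_ord nat_of_ord] in *; lia.

Section Gen.
Variable K : fieldType.

Definition Dn (N : nat) (vec : nat -> 'I_N -> K) (f : nat -> nat) : K :=
  \det (\matrix_(i < N, j < N) vec (f j) i).

Lemma Dn_ext N (vec : nat -> 'I_N -> K) f g : (forall j, (j < N)%N -> f j = g j) -> Dn vec f = Dn vec g.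
Proof.
move=> H; rewrite /Dn; congr (\det _); apply/matrixP=> i j; rewrite !mxE H //.
Qed.

Lemma Dn_alt N (vec : nat -> 'I_N -> K) f j1 j2 : (j1 < N)%N -> (j2 < N)%N -> j1 != j2 -> f j1 = f j2 ->
  Dn vec f = 0.
Proof.
move=> h1 h2 ne e; rewrite /Dn -det_tr.
apply: (@determinant_alternate _ _ _ (Ordinal h1) (Ordinal h2)) => // j.
by rewrite !mxE /= e.
Qed.

Lemma GLn N (vec : nat -> 'I_N -> K) (g : nat -> nat) (w : 'I_N -> K) :
  \sum_(j < N.+1) (-1) ^+ j * (\sum_i w i * vec (g j) i)
      * Dn vec (fun j' => g (bump j j')) = 0.
Proof.
pose V := \matrix_(i < N, j < N.+1) vec (g j) i.
have HD (j : 'I_N.+1) : Dn vec (fun j' => g (bump j j')) = \det (col' j V).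
  by rewrite /Dn; congr (\det _); apply/matrixP => a b; rewrite !mxE.
have E (d : 'I_N.+1 -> K) (c : 'I_N -> 'I_N.+1 -> K) :
   \sum_(j < N.+1) (-1)^+j * (\sum_i w i * c i j) * d j
   = \sum_i w i * \sum_(j < N.+1) c i j * ((-1)^+j * d j).
  under eq_bigr => j _ do rewrite mulrAC mulrC big_distrl /=.
  rewrite exchange_big; apply: eq_bigr => i _; rewrite big_distrr.
  by apply: eq_bigr => j _ /=; rewrite !mulrA.
rewrite (E (fun j : 'I_N.+1 => Dn vec (fun j' => g (bump j j'))) (fun i j => vec (g j) i)).
apply: big1 => i _; apply/eqP; rewrite mulf_eq0; apply/orP; right; apply/eqP.
pose Nm := \matrix_(a < N.+1, b < N.+1) V (odflt i (unlift 0 a)) b.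
have H0 : \det Nm = 0.
  apply: (@determinant_alternate _ _ _ 0 (lift 0 i)); first exact: neq_lift.
  by move=> b; rewrite !mxE unlift_none liftK.
rewrite -[RHS]H0 (expand_det_row _ 0); apply: eq_bigr => j _.
rewrite !mxE unlift_none /= /cofactor add0n HD.
have -> : row' 0 (col' j Nm) = col' j V.
  by apply/matrixP => a b; rewrite !mxE liftK.
by [].
Qed.


Definition Mf N (vec : nat -> 'I_N -> K) (f : nat -> nat) : 'M[K]_N :=
  \matrix_(i < N, j < N) vec (f j) i.

Lemma Dn_upd N (vec : nat -> 'I_N -> K) f (p : 'I_N) x :
  Dn vec (fun j => if j == p then x else f j) =
  \sum_i cofactor (Mf vec f) i p * vec x i.
Proof.
rewrite /Dn (expand_det_col _ p); apply: eq_bigr => i _.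
rewrite mxE eqxx mulrC; congr (_ * _).
rewrite /cofactor; congr (_ * \det _); apply/matrixP => a b; rewrite !mxE.
have -> : (lift p b == p :> nat) = false.
  by apply/negbTE; rewrite eq_sym; apply: (neq_lift p b).
by [].
Qed.

Lemma Dn_zcol N (vec : nat -> 'I_N -> K) f p : (p < N)%N ->
  (forall i, vec (f p) i = 0) -> Dn vec f = 0.
Proof.
move=> hp H; rewrite /Dn (expand_det_col _ (Ordinal hp)); apply: big1 => i _.
by rewrite mxE /= H mul0r.
Qed.

Definition mv a p (f : nat -> nat) j :=
  if (j < a)%N then f j else if j == a then f p else if (j <= p)%N then f j.-1 else f j.

Lemma Dn_mv N (vec : nat -> 'I_N -> K) f a p : (a <= p)%N -> (p < N)%N ->
  Dn vec (mv a p f) = (-1) ^+ (p - a) * Dn vec f.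
Proof.
move=> hap hpN.
case: (eqVneq a p) => [<-|nap].
  rewrite subnn expr0 mul1r; apply: Dn_ext => j hj; rewrite /mv.
  case: (ltnP j a) => // h1; case: (eqVneq j a) => [e|h2]; first by rewrite e.
  by rewrite ifF //; apply/negbTE; rewrite -ltnNge; nlia.
have lap : (a < p)%N by rewrite ltn_neqAle nap.
case: (pickP (fun i => vec (f p) i != 0)) => [i0 hi0 | hz]; last first.
  have hz' i : vec (f p) i = 0 by apply/eqP; move/negbT: (hz i); rewrite negbK.
  rewrite (Dn_zcol hpN hz') mulr0.
  apply: (@Dn_zcol _ _ _ a); first nlia.
  by move=> i; rewrite /mv ltnn eqxx hz'.
pose g j := if (j < a)%N then f j else if j == a then f p else f j.-1.
have := GLn vec g (fun i => (i == i0)%:R).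
have Hw y : \sum_i (i == i0)%:R * vec y i = vec y i0.
  rewrite (bigD1 i0) //= eqxx mul1r big1 ?addr0 // => i /negbTE ->.
  by rewrite mul0r.
under eq_bigr do rewrite Hw.
have ha : (a < N.+1)%N by nlia.
have hp1 : (p.+1 < N.+1)%N by nlia.
rewrite (bigD1 (Ordinal ha)) //= (bigD1 (Ordinal hp1)) /=; last first.
  by rewrite -(inj_eq val_inj) /=; apply/negP => /eqP h; nlia.
rewrite big1 ?addr0; last first.
  move=> j /andP [hj1 hj2].
  have hj1' : (j : nat) != a by apply: contra hj1 => /eqP h; apply/eqP/val_inj.
  have hj2' : (j : nat) != p.+1 by apply: contra hj2 => /eqP h; apply/eqP/val_inj.
  rewrite (@Dn_alt _ _ _ (unbump j a) (unbump j p.+1)) ?mulr0 //.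
  - rewrite /unbump; case: (ltnP j a) => h /=; nlia.
  - rewrite /unbump; case: (ltnP j p.+1) => h /=; move: (ltn_ord j) => hjN; nlia.
  - rewrite /unbump; case: (ltnP j a) => h; case: (ltnP j p.+1) => h' /=; nlia.
  - rewrite !unbumpKcond.
    have -> : (a == j) = false by apply/negbTE; rewrite eq_sym.
    have -> : (p.+1 == j) = false by apply/negbTE; rewrite eq_sym.
    rewrite /g !add0n ltnn eqxx.
    have -> : (p.+1 < a)%N = false by apply/negbTE; rewrite -leqNgt; nlia.
    have -> : (p.+1 == a) = false by apply/negbTE; apply/eqP; nlia.
    by [].
have E1 : Dn vec (fun j' => g (bump a j')) = Dn vec f.
  apply: Dn_ext => j hj; rewrite /g /bump.
  case: (leqP a j) => h /=.
    rewrite add1n ifF; last by apply/negbTE; rewrite -leqNgt; nlia.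
    by rewrite ifF //; apply/negbTE; apply/eqP; nlia.
  by rewrite add0n h.
have E2 : Dn vec (fun j' => g (bump p.+1 j')) = Dn vec (mv a p f).
  apply: Dn_ext => j hj; rewrite /g /mv /bump.
  case: (leqP p.+1 j) => h /=.
    rewrite add1n ifF; last by apply/negbTE; rewrite -leqNgt; nlia.
    rewrite ifF; last by apply/negbTE; apply/eqP; nlia.
    rewrite ifF; last by apply/negbTE; rewrite -leqNgt; nlia.
    rewrite ifF; last by apply/negbTE; apply/eqP; nlia.
    rewrite ifF //; apply/negbTE; rewrite -ltnNge; nlia.
  rewrite add0n; case: (ltnP j a) => // h2; case: eqP => // h3.
  by rewrite ifT //; nlia.
rewrite E1 E2 /g ltnn eqxx.
rewrite ifF; last by apply/negbTE; rewrite -leqNgt; nlia.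
rewrite ifF; last by apply/negbTE; apply/eqP; nlia.
rewrite /= => H.
have hc : vec (f p) i0 != 0 := hi0.
have Hs : (-1) ^+ p = (-1) ^+ a * (-1) ^+ (p - a) :> K by rewrite -exprD subnKC.
move: H; rewrite exprS Hs.
set X := Dn vec f; set Y := Dn vec (mv a p f); set c := vec (f p) i0; set s := (-1) ^+ a; set t := (-1) ^+ (p - a).
move=> H.
have H2 : s * c * (X - t * Y) = 0.
  rewrite -H mulrBr !mulN1r !mulNr; congr (_ - _); rewrite !mulrA; congr (_ * _).
  by rewrite -!mulrA [c * t]mulrC.
move/eqP: H2; rewrite !mulf_eq0 signr_eq0 (negbTE hc) /= subr_eq0 => /eqP ->.
by rewrite mulrA -expr2 sqrr_sign mul1r.
Qed.

Lemma Dn_unit0 N (vec : nat -> 'I_N.+1 -> K) f :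
  (forall i : 'I_N.+1, vec (f 0%N) i = (i == ord0)%:R) ->
  Dn vec f = Dn (fun w (i : 'I_N) => vec w (lift ord0 i)) (fun j => f j.+1).
Proof.
move=> H; rewrite /Dn (expand_det_col _ ord0) (bigD1 ord0) //= big1 => [|i ne];
  last by rewrite mxE H (negbTE ne) mul0r.
rewrite addr0 mxE H eqxx mul1r /cofactor /= expr0 mul1r.
by congr (\det _); apply/matrixP => a b; rewrite !mxE lift0.
Qed.

Lemma Dn_unitN N (vec : nat -> 'I_N.+1 -> K) f :
  (forall i : 'I_N.+1, vec (f N) i = (i == ord_max)%:R) ->
  Dn vec f = Dn (fun w (i : 'I_N) => vec w (widen_ord (leqnSn N) i)) f.
Proof.
move=> H; rewrite /Dn (expand_det_col _ ord_max) (bigD1 ord_max) //= big1 => [|i ne];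
  last by rewrite mxE H (negbTE ne) mul0r.
rewrite addr0 mxE H eqxx mul1r /cofactor /= -signr_odd oddD addbb expr0 mul1r.
congr (\det _); apply/matrixP => a b; rewrite !mxE lift_max.
by congr (vec _ _); apply: val_inj; rewrite /= /bump leqNgt ltn_ord.
Qed.

End Gen.
Lemma zE1 (n : int) (a b c : nat) : n + a%:Z + b%:Z - c%:Z - 1 = n + (a + b)%:Z - (c + 1)%:Z.
Proof. by rewrite !PoszD opprD !addrA. Qed.
Lemma zE2 (n : int) (a b c : nat) : n + a%:Z + b%:Z - 1 - c%:Z = n + (a + b)%:Z - (c + 1)%:Z.
Proof. by rewrite !PoszD opprD !addrA [_ - 1 - _]addrAC. Qed.
Lemma zE3 (n : int) (a b c : nat) : n + 1 + a%:Z + b%:Z - 1 - c%:Z = n + (a + b + 1)%:Z - (c + 1)%:Z.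
Proof. rewrite (zE2 (n + 1) a b c); congr (_ - _); rewrite (PoszD (a + b) 1) addrA; exact: addrAC. Qed.
Lemma zeq (n : int) (a b c d : nat) : (a + d = c + b)%N -> n + a%:Z - b%:Z = n + c%:Z - d%:Z.
Proof. move=> h. rewrite -!addrA; congr (_ + _). apply/eqP; rewrite subr_eq addrAC eq_sym subr_eq -!PoszD h. done. Qed.

Lemma sum3 (K : fieldType) N (F : nat -> K) a : (0 < a)%N -> (a < N)%N ->
  (forall j, (j < N.+1)%N -> j != 0%N -> j != a -> j != N -> F j = 0) ->
  \sum_(j < N.+1) F j = F 0%N + F a + F N.
Proof.
move=> h1 h2 H.
have ha : (a < N.+1)%N by nlia.
rewrite (bigD1 ord0) //= (bigD1 (Ordinal ha)) /=; last first.
  by rewrite -(inj_eq val_inj) /= -lt0n.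
rewrite (bigD1 ord_max) /=; last first.
  by rewrite -!(inj_eq val_inj) /=; apply/andP; split; apply/eqP; nlia.
rewrite big1 ?addr0 ?addrA // => j /andP [/andP [hj1 hj2] hj3].
move: hj1 hj2 hj3; rewrite -!(inj_eq val_inj) /= => hj1 hj2 hj3.
exact: H.
Qed.

Lemma match_det (K : fieldType) k (M : 'M[K]_k) :
  match k with 0%N => 1 | _.+1 => \det M end = \det M.
Proof. by case: k M => [|k'] M //; rewrite det_mx00. Qed.

Lemma bumpE h j : bump h j = if (h <= j)%N then j.+1 else j.
Proof. by rewrite /bump; case: leqP. Qed.

Lemma alg (K : fieldType) (a a' F R R' c1 c2 d X : K) :
  c2 * R' - a' * F + X * R = 0 -> d * R' - a * X + c1 * a' = 0 ->
  a * a' * F = R * a' * c1 + a * R' * c2 + R * R' * d.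
Proof.
move=> HP HS.
have HP' : a' * F = c2 * R' + X * R.
  by apply/eqP; rewrite eq_sym -subr_eq0 addrAC HP.
have HS' : a * X = d * R' + c1 * a'.
  by apply/eqP; rewrite eq_sym -subr_eq0 addrAC HS.
rewrite -mulrA HP' mulrDr [a * (X * R)]mulrA HS' mulrDl.
have e1 : a * (c2 * R') = a * R' * c2 by rewrite mulrA mulrAC.
have e2 : d * R' * R = R * R' * d by rewrite [RHS]mulrC [R * R']mulrC mulrA.
have e3 : c1 * a' * R = R * a' * c1 by rewrite [RHS]mulrC [R * a']mulrC mulrA.
rewrite e1 e2 e3.
by rewrite addrA addrAC (addrC (a * R' * c2)).
Qed.

Section Main.
Variables (K : fieldType) (r1 : int -> K) (n : int) (k q : nat).
Hypotheses (hq2 : (2 <= q)%N) (hqN : (q <= k.+2)%N).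
Local Notation N := k.+2.
Ltac prep := move: (hq2) (hqN) => ??.

Definition vec (w : nat) (i : 'I_N) : K :=
  if w == 0%N then (i == 0%N :> nat)%:R else if (N.+2 <= w)%N then (i == N.-1 :> nat)%:R
  else r1 (n + (i.+1)%:Z + w%:Z - N%:Z - 1).

Lemma vecH w i : (0 < w)%N -> (w <= N.+1)%N ->
  vec w i = r1 (n + (i.+1)%:Z + w%:Z - N%:Z - 1).
Proof.
move=> h1 h2; rewrite /vec ifF; last by apply/negbTE; rewrite -lt0n.
by rewrite ifF //; apply/negbTE; rewrite -ltnNge ltnS.
Qed.

Lemma L1 : Dn vec (fun j => j.+2) = rdet r1 N (n + 1).
Proof.
rewrite /Dn /rdet; congr (\det _); apply/matrixP => i j; rewrite !mxE.
move: (ltn_ord j) (ltn_ord i) => hj hi.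
rewrite vecH //.
by congr r1; rewrite zE1 zE3; apply: zeq; nlia.
Qed.

Lemma L2 : Dn vec (fun j => j.+1) = rdet r1 N n.
Proof.
rewrite /Dn /rdet; congr (\det _); apply/matrixP => i j; rewrite !mxE.
move: (ltn_ord j) (ltn_ord i) => hj hi.
rewrite vecH //; last nlia.
by congr r1; rewrite zE1 zE2; apply: zeq; nlia.
Qed.

Lemma cdetE a (mm : nat) : (mm <= a.+1)%N ->
  cdet r1 a.+1 mm%:Z n = \det (\matrix_(i < a.+1, j < a.+1)
     r1 (n + (i.+1)%:Z + (sp (a.+1 - mm) j.+1)%:Z - (a.+1)%:Z - 1)).
Proof.
move=> h; rewrite /cdet ltz_nat ltz_nat ltn0 /= ltnNge h /=.
by [].
Qed.

Lemma L3 : Dn vec (fun j => (bump q.-1 j).+1) = cdet r1 N (N.+1 - q)%N%:Z n.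
Proof.
prep.
rewrite cdetE; last nlia.
rewrite /Dn; congr (\det _); apply/matrixP => i j; rewrite !mxE.
move: (ltn_ord j) (ltn_ord i) => hj hi.
rewrite vecH; [| done | by rewrite /bump; case: (leqP q.-1 j) => h /=; nlia].
congr r1; rewrite zE1 zE1; apply: zeq.
rewrite /bump /sp; case: (leqP q.-1 j) => h /=; case: ifP => h' /=; nlia.
Qed.

Lemma cdetE0 a (mm : nat) : (mm <= a)%N ->
  cdet r1 a mm%:Z n = \det (\matrix_(i < a, j < a)
     r1 (n + (i.+1)%:Z + (sp (a - mm) j.+1)%:Z - a%:Z - 1)).
Proof.
move=> h; rewrite /cdet ltz_nat ltz_nat ltn0 /= ltnNge h /=.
by rewrite match_det.
Qed.

Definition hA' j := if j == 0%N then 0%N else j.+1.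
Definition fQP j := if (j < q)%N then j else j.+1.
Definition h2 j := if j == N.-1 then N.+2 else j.+2.
Definition h3 j := if j == N.-1 then N.+2 else if (j.+2 < q)%N then j.+2 else j.+3.
Definition fQS j := if j == N.-1 then N.+2 else if (j.+1 < q)%N then j.+1 else j.+2.

Lemma vecE0 (i : 'I_N) : vec 0 i = (i == ord0)%:R.
Proof. by []. Qed.

Lemma vecEN (i : 'I_N) : vec N.+2 i = (i == ord_max)%:R.
Proof. by rewrite /vec /= leqnn. Qed.

Lemma L4 : Dn vec hA' = rdet r1 k.+1 (n + 1).
Proof.
rewrite (Dn_unit0 (vec := vec)); last by move=> i; rewrite /hA' /= vecE0.
rewrite /Dn /rdet; congr (\det _); apply/matrixP => i j; rewrite !mxE /hA' /=.
move: (ltn_ord j) (ltn_ord i) => hj hi.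
rewrite vecH //; last nlia.
by congr r1; rewrite lift0 zE1 zE3; apply: zeq; nlia.
Qed.

Lemma L5 : Dn vec fQP = cdet r1 k.+1 (N - q)%N%:Z n.
Proof.
prep.
rewrite (Dn_unit0 (vec := vec)); last first.
  by move=> i; rewrite /fQP ifT ?vecE0 //; nlia.
rewrite cdetE0; last nlia.
rewrite /Dn; congr (\det _); apply/matrixP => i j; rewrite !mxE /fQP /=.
move: (ltn_ord j) (ltn_ord i) => hj hi.
rewrite vecH; [| by case: ifP | by case: ifP => h; nlia].
congr r1; rewrite lift0 zE1 zE1; apply: zeq.
rewrite /sp; case: ifP => h /=; case: ifP => h' /=; nlia.
Qed.

Lemma L6 : Dn vec h2 = rdet r1 k.+1 n.
Proof.
rewrite (Dn_unitN (vec := vec)); last by move=> i; rewrite /h2 /= eqxx vecEN.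
rewrite /Dn /rdet; congr (\det _); apply/matrixP => i j; rewrite !mxE /h2 /=.
move: (ltn_ord j) (ltn_ord i) => hj hi.
rewrite ifF; last by apply/negbTE; nlia.
rewrite vecH //; last nlia.
by congr r1; rewrite zE1 zE2; apply: zeq; nlia.
Qed.

Lemma L7 : Dn vec h3 = cdet r1 k.+1 (N.+1 - q)%N%:Z n.
Proof.
prep.
rewrite (Dn_unitN (vec := vec)); last by move=> i; rewrite /h3 /= eqxx vecEN.
rewrite cdetE0; last nlia.
rewrite /Dn; congr (\det _); apply/matrixP => i j; rewrite !mxE /h3 /=.
move: (ltn_ord j) (ltn_ord i) => hj hi.
rewrite ifF; last by apply/negbTE; nlia.
rewrite vecH; [| by case: ifP | by case: ifP => h; nlia].
congr r1; rewrite zE1 zE1; apply: zeq.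
rewrite /sp; case: ifP => h /=; case: ifP => h' /=; nlia.
Qed.

Lemma L8 : Dn vec (fun j => if j == 0%N then 0%N else fQS j) = cdet r1 k (N - q)%N%:Z n.
Proof.
prep.
rewrite (Dn_unit0 (vec := vec)); last by move=> i; rewrite /= vecE0.
rewrite (Dn_unitN (N := k)); last first.
  by move=> i; rewrite /= /fQS /= eqxx /vec /= leqnn /bump add1n eqSS.
rewrite cdetE0; last nlia.
rewrite /Dn; congr (\det _); apply/matrixP => i j; rewrite !mxE /fQS /=.
move: (ltn_ord j) (ltn_ord i) => hj hi.
rewrite ifF; last by apply/negbTE; nlia.
rewrite vecH; [| by case: ifP | by case: ifP => h; nlia].
congr r1; rewrite lift0 zE1 zE1; apply: zeq.
rewrite /sp; case: ifP => h /=; case: ifP => h' /=; nlia.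
Qed.

Ltac splitif := match goal with |- context [if ?b then _ else _] =>
   match b with context [if _ then _ else _] => fail 1 | _ => case: (boolP b) => ? /= end end.
Ltac crush := rewrite /mv /hA' /fQP /fQS /h2 /h3 /= ?bumpE; repeat splitif; nlia.

Lemma GP : Dn vec fQP * Dn vec (fun j => j.+2)
  - Dn vec hA' * Dn vec (fun j => (bump q.-1 j).+1)
  + (-1) ^+ N * Dn vec (fun j => if j == 1%N then N.+1 else fQP j) * Dn vec (fun j => j.+1) = 0.
Proof.
prep.
have p1lt : (1 < N)%N by [].
have := GLn vec (fun j => j.+1) (fun i => cofactor (Mf vec fQP) i (Ordinal p1lt)).
rewrite (@sum3 _ _ (fun j => (-1) ^+ j * (\sum_i cofactor (Mf vec fQP) i (Ordinal p1lt) * vec j.+1 i)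
    * Dn vec (fun j' => (bump j j').+1)) q.-1); [| nlia | nlia | ]; last first.
  move=> j hj h0 hq hN; rewrite -Dn_upd /=.
  have [hjq|hjq] := ltnP j.+1 q.
    by rewrite (@Dn_alt _ _ vec _ 1 j.+1) ?mulr0 ?mul0r //; crush.
  by rewrite (@Dn_alt _ _ vec _ 1 j) ?mulr0 ?mul0r //; crush.
rewrite -!Dn_upd /=.
have E0 : Dn vec (fun j => if j == 1%N then 1%N else fQP j) = Dn vec fQP.
  by apply: Dn_ext => j hj; crush.
have E1 : Dn vec (fun j' => (bump 0 j').+1) = Dn vec (fun j => j.+2).
  by apply: Dn_ext => j hj; crush.
have E2 : Dn vec (fun j => if j == 1%N then q.-1.+1 else fQP j) = (-1) ^+ (q.-1 - 1) * Dn vec hA'.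
  rewrite -Dn_mv; [| nlia | nlia]; apply: Dn_ext => j hj; crush.
have E3 : Dn vec (fun j' => (bump N j').+1) = Dn vec (fun j => j.+1).
  by apply: Dn_ext => j hj; crush.
rewrite E0 E1 E2 E3 expr0 mul1r => <-.
congr (_ + _ + _).
rewrite mulrA -exprD.
have -> : (q.-1 + (q.-1 - 1) = (q.-1 - 1) * 2 + 1)%N by nlia.
by rewrite exprD exprM sqrr_sign mul1r expr1 mulN1r mulNr.
Qed.

Lemma GS : Dn vec (fun j => if j == 0%N then 0%N else fQS j) * Dn vec (fun j => j.+2)
  - Dn vec h2 * Dn vec (fun j' => hA' (bump q.-1 j'))
  + Dn vec h3 * Dn vec hA' = 0.
Proof.
prep.
have := GLn vec hA' (fun i => cofactor (Mf vec fQS) i ord0).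
rewrite (@sum3 _ _ (fun j => (-1) ^+ j * (\sum_i cofactor (Mf vec fQS) i ord0 * vec (hA' j) i)
    * Dn vec (fun j' => hA' (bump j j'))) q.-1); [| nlia | nlia | ]; last first.
  move=> j hj h0 hq hN; rewrite -Dn_upd /=.
  have [hjq|hjq] := ltnP j.+1 q.
    by rewrite (@Dn_alt _ _ vec _ 0 j) ?mulr0 ?mul0r //; crush.
  by rewrite (@Dn_alt _ _ vec _ 0 j.-1) ?mulr0 ?mul0r //; crush.
rewrite -!Dn_upd /=.
have E0 : Dn vec (fun j => if j == 0%N then hA' 0 else fQS j) =
          Dn vec (fun j => if j == 0%N then 0%N else fQS j).
  by apply: Dn_ext => j hj; crush.
have E1 : Dn vec (fun j' => hA' (bump 0 j')) = Dn vec (fun j => j.+2).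
  by apply: Dn_ext => j hj; crush.
have E2 : Dn vec (fun j => if j == 0%N then hA' q.-1 else fQS j) = (-1) ^+ (q.-2 - 0) * Dn vec h2.
  rewrite -Dn_mv; [| nlia | nlia]; apply: Dn_ext => j hj; crush.
have E3 : Dn vec (fun j => if j == 0%N then hA' N else fQS j) = (-1) ^+ (k - 0) * Dn vec h3.
  rewrite -Dn_mv; [| nlia | nlia]; apply: Dn_ext => j hj; crush.
have E4 : Dn vec (fun j' => hA' (bump N j')) = Dn vec hA'.
  by apply: Dn_ext => j hj; crush.
rewrite E0 E1 E2 E3 E4 expr0 mul1r !subn0 => <-.
congr (_ + _ + _).
  rewrite mulrA -exprD.
  have -> : (q.-1 + q.-2 = q.-2 * 2 + 1)%N by nlia.
  by rewrite exprD exprM sqrr_sign mul1r expr1 mulN1r mulNr.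
rewrite mulrA -exprD.
have -> : (N + k = k * 2 + 2)%N by nlia.
by rewrite exprD exprM sqrr_sign mul1r expr2 mulrNN mulr1 mul1r.
Qed.

Lemma YX : Dn vec (fun j => if j == 1%N then N.+1 else fQP j) =
   (-1) ^+ (N.-1 - 1) * Dn vec (fun j' => hA' (bump q.-1 j')).
Proof.
prep.
rewrite -Dn_mv; [| nlia | nlia]; apply: Dn_ext => j hj; crush.
Qed.

Lemma cdet0 a : cdet r1 a.+1 0%N%:Z n = rdet r1 a.+1 n.
Proof.
rewrite cdetE0 // /rdet; congr (\det _); apply/matrixP => i j; rewrite !mxE.
move: (ltn_ord j) (ltn_ord i) => hj hi.
congr r1; rewrite zE1 zE2; apply: zeq; rewrite /sp; case: ifP => h; nlia.
Qed.

Lemma cdetT a : cdet r1 a.+1 a.+1%:Z n = rdet r1 a.+1 (n + 1).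
Proof.
rewrite cdetE0 // /rdet; congr (\det _); apply/matrixP => i j; rewrite !mxE.
move: (ltn_ord j) (ltn_ord i) => hj hi.
congr r1; rewrite zE1 zE3; apply: zeq; rewrite /sp; case: ifP => h; nlia.
Qed.

Lemma cdetN1 a : cdet r1 a (0%N%:Z - 1) n = 0.
Proof. by rewrite /cdet sub0r ltrN10. Qed.

Lemma cdetBig a b : (a < b)%N -> cdet r1 a b%:Z n = 0.
Proof. by move=> h; rewrite /cdet ltz_nat h orbT. Qed.

Lemma Mainq :
  rdet r1 k.+1 n * rdet r1 k.+1 (n + 1) * cdet r1 N (N.+1 - q)%N%:Z n =
  rdet r1 N n * rdet r1 k.+1 (n + 1) * cdet r1 k.+1 (N.+1 - q)%N%:Z n
  + rdet r1 k.+1 n * rdet r1 N (n + 1) * cdet r1 k.+1 (N - q)%N%:Z n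
  + rdet r1 N n * rdet r1 N (n + 1) * cdet r1 k (N - q)%N%:Z n.
Proof.
rewrite -L1 -L2 -L3 -L4 -L5 -L6 -L7 -L8.
apply: (alg (X := Dn vec (fun j' => hA' (bump q.-1 j')))); last exact: GS.
have := GP; rewrite YX.
have -> : (N.-1 - 1 = k)%N by rewrite /= subn1.
rewrite mulrA -exprD.
have -> : (N + k = k * 2 + 2)%N by nlia.
by rewrite exprD exprM sqrr_sign mul1r expr2 mulrNN mulr1 mul1r.
Qed.

End Main.

Unset Implicit Arguments.

Theorem mainTheorem4 (K : fieldType) (r1 : int -> K) (alpha m : nat) (n : int) :
  (2 <= alpha)%N -> (m <= alpha)%N ->
  rdet r1 alpha.-1 n * rdet r1 alpha.-1 (n + 1) * cdet r1 alpha m%:Z n =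
    rdet r1 alpha n * rdet r1 alpha.-1 (n + 1) * cdet r1 alpha.-1 m%:Z n
  + rdet r1 alpha.-1 n * rdet r1 alpha (n + 1) * cdet r1 alpha.-1 (m%:Z - 1) n
  + rdet r1 alpha n * rdet r1 alpha (n + 1) * cdet r1 alpha.-2 (m%:Z - 1) n.
Proof.
case: alpha => [|[|k]] // _ hm.
change (k.+2.-1) with k.+1; change (k.+2.-2) with k.
have [->|m0] := eqVneq m 0%N.
  rewrite !cdetN1 !mulr0 !addr0 cdet0 cdet0.
  by rewrite [RHS]mulrC [rdet r1 k.+2 n * _]mulrC mulrA.
have [em|mN] := eqVneq m k.+2.
  rewrite em.
  have -> : (k.+2)%:Z - 1 = (k.+1)%N%:Z by rewrite (@subzn k.+2 1).
  rewrite cdetT (@cdetBig _ r1 n k.+1 k.+2) // (@cdetBig _ r1 n k k.+1) // cdetT.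
  by rewrite !mulr0 add0r addr0 mulrAC.
pose q := (k.+3 - m)%N.
have hq2 : (2 <= q)%N by rewrite /q; nlia.
have hqN : (q <= k.+2)%N by rewrite /q; nlia.
have e1 : m%:Z - 1 = (k.+2 - q)%N%:Z.
  rewrite (@subzn m 1); last nlia.
  by congr (Posz _); rewrite /q; nlia.
have e2 : m = (k.+3 - q)%N by rewrite /q; nlia.
rewrite e1 {1 2}e2.
exact: (Mainq r1 n hq2 hqN).
Qed.
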